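(* In the link-cut tree data structure of Sleator and Tarjan (implemented with splay trees over preferred paths), every operation (link, cut, and queries, all implemented via expose together with $O(1)$ splay-tree concatenate/split operations) takes $O(D^2)$ worst-case time, where $D$ is the diameter of the represented input tree (the maximum number of edges on a simple path).
   Context: The link-cut tree represents a dynamic forest by decomposing each tree into vertex-disjoint preferred paths, each stored in a splay tree keyed by depth; the expose operation makes the path from a vertex to its tree root preferred via a sequence of splice, concatenate and split operations on these splay trees. *)

(* Defs.v *)
From mathcomp Require Import all_boot.
Set Implicit Arguments. Unset Strict Implicit. Unset Printing Implicit Defensive.

Section LCT.
Variable V : finType.

Inductive stree : Type := SLeaf | SNode of stree & V & stree.

Fixpoint inorder (t : stree) : seq V :=
  match t with SLeaf => [::] | SNode l x r => inorder l ++ x :: inorder r end.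

Fixpoint sdepth (x : V) (t : stree) : nat :=
  match t with
  | SLeaf => 0
  | SNode l y r =>
      if x == y then 0
      else if x \in inorder l then (sdepth x l).+1 else (sdepth x r).+1
  end.

(** Bottom-up splaying of x to the root (zig / zig-zig / zig-zag),
    written recursively: if the depth of x is odd the single rotation
    (zig) is the last one, performed at the root. *)
Fixpoint splay (x : V) (t : stree) : stree :=
  match t with
  | SLeaf => SLeaf
  | SNode l y r =>
    if x == y then t else
    if x \in inorder l then
      if odd (sdepth x t) then
        match splay x l with
        | SNode a z b => SNode a z (SNode b y r)
        | SLeaf => t end
      else
        match l with
        | SLeaf => t
        | SNode ll z lr =>
          if x \in inorder ll then
            match splay x ll with
            | SNode a w b => SNode a w (SNode b z (SNode lr y r))
            | SLeaf => t end
          else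
            match splay x lr with
            | SNode a w b => SNode (SNode ll z a) w (SNode b y r)
            | SLeaf => t end
        end
    else if x \in inorder r then
      if odd (sdepth x t) then
        match splay x r with
        | SNode a z b => SNode (SNode l y a) z b
        | SLeaf => t end
      else
        match r with
        | SLeaf => t
        | SNode rl z rr =>
          if x \in inorder rr then
            match splay x rr with
            | SNode a w b => SNode (SNode (SNode l y rl) z a) w b
            | SLeaf => t end
          else
            match splay x rl with
            | SNode a w b => SNode (SNode l y a) w (SNode b z rr)
            | SLeaf => t end
        end
    else t
  end.

(** cost of splaying x in t: number of rotations (= depth of x) plus one *)
Definition splay_cost (x : V) (t : stree) : nat := (sdepth x t).+1.

Fixpoint leftmost (t : stree) : option V :=
  match t with
  | SLeaf => None
  | SNode SLeaf x _ => Some x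
  | SNode l _ _ => leftmost l
  end.

Fixpoint leftmost_steps (t : stree) : nat :=
  match t with
  | SLeaf => 0
  | SNode SLeaf _ _ => 0
  | SNode l _ _ => (leftmost_steps l).+1
  end.

(** A link-cut tree state: the list of auxiliary splay trees, one per
    preferred path (in-order = increasing depth), each with its
    path-parent pointer. *)
Definition state := seq (stree * option V).

Definition tidx (s : state) (x : V) : nat :=
  find (fun p : stree * option V => x \in inorder p.1) s.

Definition extract (s : state) (x : V) : (stree * option V) * state :=
  (nth (SLeaf, None) s (tidx s x), take (tidx s x) s ++ drop (tidx s x).+1 s).

Definition rpar (s : state) (x : V) : option V :=
  let p := nth (SLeaf, None) s (tidx s x) in
  let l := inorder p.1 in
  let i := index x l in
  if i == 0 then p.2 else Some (nth x l i.-1).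

Definition all_verts (s : state) : seq V := flatten [seq inorder p.1 | p <- s].

Definition lct_valid (s : state) : Prop :=
  [/\ uniq (all_verts s),
      forall x, x \in all_verts s
    & forall x, exists n, iter n (fun o => obind (rpar s) o) (Some x) = None].

Definition adj (s : state) : rel V :=
  fun x y => (rpar s x == Some y) || (rpar s y == Some x).

Definition diam_le (s : state) (D : nat) : Prop :=
  forall (x : V) (p : seq V), uniq (x :: p) -> path (adj s) x p -> size p <= D.

Definition connected (s : state) (v w : V) : Prop :=
  exists p, path (adj s) v p /\ last v p = w.

(** The expose/access loop: v's current auxiliary tree tv (v at root) has
    path-parent pp; splice it onto the preferred path of pp. *)
Fixpoint access_loop (fuel : nat) (v : V) (tv : stree) (pp : option V)
    (s : state) : stree * option V * state * nat :=
  match pp with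
  | None => (tv, pp, s, 0)
  | Some w =>
    match fuel with
    | 0 => (tv, pp, s, 0)
    | f.+1 =>
      let ex := extract s w in
      let tw := ex.1.1 in
      match splay w tw with
      | SLeaf => (tv, pp, s, 0)
      | SNode l _ r =>
        (* split off w's deeper part, concatenate v's path below w *)
        let s'' := if r is SLeaf then ex.2 else (r, Some w) :: ex.2 in
        let tn := SNode l w tv in
        let '(t, pp', s3, c) := access_loop f v (splay v tn) ex.1.2 s'' in
        (t, pp', s3, splay_cost w tw + splay_cost v tn + 1 + c)
      end
    end
  end.

(** expose(v): returns the new state (v's auxiliary tree first, with v at
    its root) and the cost. *)
Definition access (s : state) (v : V) : state * nat :=
  let ex := extract s v in
  match splay v ex.1.1 with
  | SLeaf => (s, 0)
  | SNode l x r =>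
    let s2 := if r is SLeaf then ex.2 else (r, Some v) :: ex.2 in
    let '(t, pp', s3, c) := access_loop #|V| v (SNode l x SLeaf) ex.1.2 s2 in
    ((t, pp') :: s3, splay_cost v ex.1.1 + 1 + c)
  end.

Inductive op : Type :=
| Expose of V
| FindRoot of V
| Link of V & V        (* make root v a child of w *)
| Cut of V.

Definition run_op (s : state) (o : op) : state * option V * nat :=
  match o with
  | Expose v => let '(s1, c1) := access s v in (s1, None, c1)
  | FindRoot v =>
    let '(s1, c1) := access s v in
    match s1 with
    | (t, pp) :: rest =>
      match leftmost t with
      | Some r => ((splay r t, pp) :: rest, Some r,
                   c1 + leftmost_steps t + splay_cost r t + 1)
      | None => (s1, None, c1 + 1)
      end
    | [::] => (s1, None, c1 + 1)
    end
  | Link v w =>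
    let '(s1, c1) := access s v in
    let '(s2, c2) := access s1 w in
    match s2 with
    | (tw, _) :: rest =>
      let ex := extract rest v in
      match ex.1.1 with
      | SNode _ x r => ((SNode tw x r, ex.1.2) :: ex.2, None, c1 + c2 + 1)
      | SLeaf => (s2, None, c1 + c2 + 1)
      end
    | [::] => (s2, None, c1 + c2 + 1)
    end
  | Cut v =>
    let '(s1, c1) := access s v in
    match s1 with
    | (SNode l x r, pp) :: rest =>
      ((l, None) :: (SNode SLeaf x r, pp) :: rest, None, c1 + 1)
    | _ => (s1, None, c1 + 1)
    end
  end.

Definition op_cost (s : state) (o : op) : nat := (run_op s o).2.

Definition op_pre (s : state) (o : op) : Prop :=
  match o with
  | Link v w => rpar s v = None /\ ~ connected s v w
  | Cut v => rpar s v <> None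
  | _ => True
  end.

End LCT.

Arguments SLeaf {V}.

(* Main.v *)
Require Import Defs.
From mathcomp Require Import all_boot zify.
Set Implicit Arguments. Unset Strict Implicit. Unset Printing Implicit Defensive.

Lemma inorder_splay (V : finType) (x : V) t : inorder (splay x t) = inorder t.
Proof.
have: forall n (t : stree V), size (inorder t) < n -> inorder (splay x t) = inorder t.
  elim=> [//|n IH] [//|l y r] Hs.
  have Hl : size (inorder l) < n by move: Hs; rewrite /= size_cat /=; lia.
  have Hr : size (inorder r) < n by move: Hs; rewrite /= size_cat /=; lia.
  clear Hs; rewrite /=.
  case: (x =P y) => // _.
  case: ifP => xl.
    case: ifP => _.
      case E: (splay x l) => [|a z b] //.
      by move: (IH _ Hl); rewrite E /= => <-; rewrite -!catA /= -?catA.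
    case: l Hl xl IH => [//|ll z lr] Hl xl IH.
    have Hll : size (inorder ll) < n by move: Hl; rewrite /= size_cat /=; lia.
    have Hlr : size (inorder lr) < n by move: Hl; rewrite /= size_cat /=; lia.
    case: ifP => _.
      case E: (splay x ll) => [|a w b] //.
      by move: (IH _ Hll); rewrite E /= => <-; rewrite -!catA /= -?catA.
    case E: (splay x lr) => [|a w b] //.
    by move: (IH _ Hlr); rewrite E /= => <-; rewrite -!catA /= -?catA.
  case: ifP => // xr.
  case: ifP => _.
    case E: (splay x r) => [|a z b] //.
    by move: (IH _ Hr); rewrite E /= => <-; rewrite -!catA /= -?catA.
  case: r Hr xr IH => [//|rl z rr] Hr xr IH.
  have Hrl : size (inorder rl) < n by move: Hr; rewrite /= size_cat /=; lia.
  have Hrr : size (inorder rr) < n by move: Hr; rewrite /= size_cat /=; lia.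
  case: ifP => _.
    case E: (splay x rr) => [|a w b] //.
    by move: (IH _ Hrr); rewrite E /= => <-; rewrite -!catA /= -?catA.
  case E: (splay x rl) => [|a w b] //.
  by move: (IH _ Hrl); rewrite E /= => <-; rewrite -!catA /= -?catA.
by move/(_ (size (inorder t)).+1 t (ltnSn _)).
Qed.

Lemma splay_root (V : finType) (x : V) t :
  x \in inorder t -> exists a b, splay x t = SNode a x b.
Proof.
have: forall n (t : stree V), size (inorder t) < n ->
   x \in inorder t -> exists a b, splay x t = SNode a x b.
  elim=> [//|n IH] [//|l y r] Hs.
  have Hl : size (inorder l) < n by move: Hs; rewrite /= size_cat /=; lia.
  have Hr : size (inorder r) < n by move: Hs; rewrite /= size_cat /=; lia.
  clear Hs => xt.
  rewrite /=.
  case: (x =P y) => [->|xy]; first by exists l, r.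
  case: ifP => xl.
    case: ifP => odd1.
      have [a [b E]] := IH _ Hl xl.
      by rewrite E; exists a, (SNode b y r).
    clear xt; case: l Hl xl IH odd1 => [//|ll z lr] Hl xl IH odd1.
    have Hll : size (inorder ll) < n by move: Hl; rewrite /= size_cat /=; lia.
    have Hlr : size (inorder lr) < n by move: Hl; rewrite /= size_cat /=; lia.
    have xz : x != z.
      apply/eqP=> xz; move: odd1; rewrite /= xz eqxx.
      by rewrite mem_cat in_cons eqxx orbT.
    case: ifP => xll.
      have [a [b E]] := IH _ Hll xll.
      by rewrite E; exists a, (SNode b z (SNode lr y r)).
    have xlr : x \in inorder lr.
      by move: xl; rewrite /= mem_cat in_cons xll (negbTE xz).
    have [a [b E]] := IH _ Hlr xlr.
    by rewrite E; exists (SNode ll z a), (SNode b y r).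
  have xr : x \in inorder r.
    by move: xt; rewrite /= mem_cat in_cons xl; case: (x =P y).
  rewrite xr.
  case: ifP => odd1.
    have [a [b E]] := IH _ Hr xr.
    by rewrite E; exists (SNode l y a), b.
  case: r Hr xr IH odd1 {xt} => [//|rl z rr] Hr xr IH odd1.
  have Hrl : size (inorder rl) < n by move: Hr; rewrite /= size_cat /=; lia.
  have Hrr : size (inorder rr) < n by move: Hr; rewrite /= size_cat /=; lia.
  have xz : x != z.
    apply/eqP=> xz; move: odd1; rewrite /= xz eqxx.
    case: (z =P y) => [zy|zy]; first by move: xy; rewrite xz zy.
    by move: xl; rewrite xz => ->.
  case: ifP => xrr.
    have [a [b E]] := IH _ Hrr xrr.
    by rewrite E; exists (SNode (SNode l y rl) z a), b.
  have xrl : x \in inorder rl.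
    by move: xr; rewrite /= mem_cat in_cons xrr (negbTE xz) !orbF.
  have [a [b E]] := IH _ Hrl xrl.
  by rewrite E; exists (SNode l y a), (SNode b z rr).
by move/(_ (size (inorder t)).+1 t (ltnSn _)).
Qed.

Lemma sdepth_le (V : finType) (x : V) t : sdepth x t <= size (inorder t).
Proof.
elim: t => [//|l IHl y r IHr] /=; rewrite size_cat /=.
case: (x == y) => //; case: (x \in inorder l); lia.
Qed.

Lemma leftmost_steps_le (V : finType) (t : stree V) : leftmost_steps t <= size (inorder t).
Proof.
elim: t => [//|l IHl y r IHr] /=; rewrite size_cat /=.
case: l IHl => [//|ll z lr] /= IHl; lia.
Qed.

Definition ltrh (V : finType) (h : V -> nat) : rel V := fun a b => h a < h b.

Definition good (V : finType) (h : V -> nat) (tp : stree V * option V) : Prop :=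
  pairwise (ltrh h) (inorder tp.1) /\
  forall u w, u \in inorder tp.1 -> tp.2 = Some w -> h w < h u.

Fixpoint allG (V : finType) (h : V -> nat) (s : state V) : Prop :=
  match s with [::] => True | tp :: s' => good h tp /\ allG h s' end.

Lemma allG_nth (V : finType) h (s : state V) n : allG h s -> good h (nth (SLeaf, None) s n).
Proof.
elim: s n => [|tp s IH] n /=.
  by move=> _; rewrite nth_nil; split => // u w; rewrite in_nil.
by case=> H1 H2; case: n => //= n; exact: IH.
Qed.

Lemma allG_cat (V : finType) h (s1 s2 : state V) : allG h s1 -> allG h s2 -> allG h (s1 ++ s2).
Proof. by elim: s1 => [|tp s IH] //= [H1 H2] H3; split => //; apply: IH. Qed.

Lemma allG_take (V : finType) h (s : state V) n : allG h s -> allG h (take n s).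
Proof. elim: s n => [|tp s IH] n //=; case: n => [|n] //= [H1 H2]; split => //; exact: IH. Qed.

Lemma allG_drop (V : finType) h (s : state V) n : allG h s -> allG h (drop n s).
Proof. elim: s n => [|tp s IH] n //=; case: n => [|n] //= [H1 H2] //; exact: IH. Qed.

Lemma allG_extract (V : finType) h (s : state V) w : allG h s ->
  good h (extract s w).1 /\ allG h (extract s w).2.
Proof.
move=> H; split; first exact: allG_nth.
by apply: allG_cat; [apply: allG_take|apply: allG_drop].
Qed.

Lemma extract_in (V : finType) (s : state V) w :
  (extract s w).1.1 = SLeaf \/ w \in inorder (extract s w).1.1.
Proof.
rewrite /extract /tidx /=.
case: (ltnP (find (fun p : stree V * option V => w \in inorder p.1) s) (size s)) => H.
  by right; move: H; rewrite -has_find => /(nth_find (SLeaf, None)).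
by left; rewrite nth_default.
Qed.

Lemma size_good (V : finType) h B (l : seq V) : (forall x, h x <= B) ->
  pairwise (ltrh h) l -> size l <= B.+1.
Proof.
move=> hB.
have: forall n, pairwise (ltrh h) l -> all (fun x => n <= h x) l -> size l <= B.+1 - n.
  elim: l => [|x l IH] n //= /andP [H1 H2] /andP [H3 H4].
  have := IH (h x).+1 H2.
  have: all (fun y => (h x).+1 <= h y) l.
    by apply/allP => y yl; move/allP: H1 => /(_ y yl).
  move=> H5 /(_ H5); have := hB x; lia.
move/(_ 0) => H P; move: (H P); rewrite subn0; apply.
by apply/allP.
Qed.

Lemma good_split (V : finType) h (t : stree V) p w (l r : stree V) :
  good h (t, p) -> inorder t = inorder l ++ w :: inorder r ->
  [/\ pairwise (ltrh h) (inorder l), all (fun u => h u < h w) (inorder l),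
      pairwise (ltrh h) (inorder r), all (fun u => h w < h u) (inorder r)
    & forall u q, u \in inorder l ++ [:: w] -> p = Some q -> h q < h u].
Proof.
move=> [P Q] E; move: P; rewrite E pairwise_cat pairwise_cons.
move=> /and3P [A Pl /andP [Pw Pr]]; split => //.
- apply/allP => u ul; move/allrelP: A => /(_ u w ul); apply; exact: mem_head.
- by move=> u q ul pq; apply: (Q u q) => //; rewrite E -cat1s catA mem_cat ul.
Qed.

Lemma loop_ok (V : finType) (h : V -> nat) B (hB : forall x, h x <= B) f v tv pp sc m :
  allG h sc -> good h (tv, pp) -> (forall w, pp = Some w -> h w < m) ->
  (access_loop f v tv pp sc).2 <= m * (2 * B + 5) /\
  good h ((access_loop f v tv pp sc).1.1.1, (access_loop f v tv pp sc).1.1.2) /\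
  allG h (access_loop f v tv pp sc).1.2.
Proof.
elim: f v tv pp sc m => [|f IH] v tv [w|] sc m Hs Ht Hm //=.
have [Gex Aex] := allG_extract w Hs.
case E: (splay w (extract sc w).1.1) => [|l z r] //.
have win : w \in inorder (extract sc w).1.1.
  by case: (extract_in sc w) => // E1; move: E; rewrite E1.
have [a [b E2]] := splay_root win.
move: E; rewrite E2 => -[El Ez Er]; subst a z b.
have Eio : inorder (extract sc w).1.1 = inorder l ++ w :: inorder r.
  by rewrite -(inorder_splay w) E2.
have [Pl Al Pr Ar Ql] := good_split (p := (extract sc w).1.2) (conj (Gex.1) (Gex.2)) Eio.
set s'' := if r is SLeaf then (extract sc w).2 else (r, Some w) :: (extract sc w).2.
have As'' : allG h s''.
  rewrite /s''; case: (r) Pr Ar => [|rl rz rr] Pr Ar //=; split => //; split => //.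
  by move=> u q ur [<-]; move/allP: Ar => /(_ u ur).
set tn := SNode l w tv.
have Gtn : good h (splay v tn, (extract sc w).1.2).
  rewrite /good inorder_splay /=; split.
    rewrite pairwise_cat Pl /=.
    case: Ht => Pt Qt; rewrite Pt andbT; apply/andP; split.
      apply/allrelP => x y xl; rewrite in_cons => /orP [/eqP->|yt].
        by move/allP: Al => /(_ x xl).
      move/allP: Al => /(_ x xl) /= H1; have := Qt y w yt erefl; rewrite /ltrh; lia.
    by apply/allP => y yt; apply: (Qt y w yt erefl).
  move=> u q; rewrite mem_cat in_cons => /orP [ul|/orP [/eqP->|ut]] pq.
  - by apply: (Ql u q) => //; rewrite mem_cat ul.
  - by apply: (Ql w q) => //; rewrite mem_cat mem_head orbT.
  - have := Ql w q; rewrite mem_cat mem_head orbT => /(_ erefl pq).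
    case: Ht => _ Qt; have := Qt u w ut erefl; lia.
have Hm' : forall w', (extract sc w).1.2 = Some w' -> h w' < m.-1.
  move=> w' E'; have := Ql w w'; rewrite mem_cat mem_head orbT => /(_ erefl E').
  have := Hm w erefl; lia.
have [IH1 [IH2 IH3]] := IH v (splay v tn) _ s'' m.-1 As'' Gtn Hm'.
rewrite -/tn -/s''.
case: (access_loop f v (splay v tn) (extract sc w).1.2 s'') IH1 IH2 IH3 => [[[t pp'] s3] c] /= IH1 IH2 IH3.
split => //.
have c1 : splay_cost w (extract sc w).1.1 <= B.+2.
  rewrite /splay_cost; have := sdepth_le w (extract sc w).1.1.
  have := size_good hB Gex.1; lia.
have c2 : splay_cost v tn <= B.+2.
  rewrite /splay_cost; have := sdepth_le v tn.
  have := size_good hB Gtn.1; rewrite inorder_splay; lia.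
move: c1; rewrite /extract /= => c1; have := Hm w erefl; nia.
Qed.

Lemma access_ok (V : finType) (h : V -> nat) B (hB : forall x, h x <= B) (s : state V) v :
  allG h s -> (access s v).2 <= B.+3 + B.+1 * (2 * B + 5) /\ allG h (access s v).1.
Proof.
move=> Hs; rewrite /access.
have [Gex Aex] := allG_extract v Hs.
case E: (splay v (extract s v).1.1) => [|l z r] /=; first by split.
have vin : v \in inorder (extract s v).1.1.
  by case: (extract_in s v) => // E1; move: E; rewrite E1.
have [a [b E2]] := splay_root vin.
move: E; rewrite E2 => -[El Ez Er]; subst a z b.
have Eio : inorder (extract s v).1.1 = inorder l ++ v :: inorder r.
  by rewrite -(inorder_splay v) E2.
have [Pl Al Pr Ar Ql] := good_split (p := (extract s v).1.2) (conj (Gex.1) (Gex.2)) Eio.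
set s2 := if r is SLeaf then (extract s v).2 else (r, Some v) :: (extract s v).2.
have As2 : allG h s2.
  rewrite /s2; case: (r) Pr Ar => [|rl rz rr] Pr Ar //=; split => //; split => //.
  by move=> u q ur [<-]; move/allP: Ar => /(_ u ur).
have Gt : good h (SNode l v SLeaf, (extract s v).1.2).
  split => /=.
    rewrite pairwise_cat Pl /= andbT; apply/allrelP => x y xl.
    by rewrite mem_seq1 => /eqP->; move/allP: Al => /(_ x xl).
  by move=> u q ul pq; apply: (Ql u q).
have Hm : forall w, (extract s v).1.2 = Some w -> h w < B.+1.
  by move=> w _; have := hB w; lia.
have [L1 [L2 L3]] := loop_ok hB #|V| v As2 Gt Hm.
rewrite -/s2.
case: (access_loop #|V| v (SNode l v SLeaf) (extract s v).1.2 s2) L1 L2 L3 => [[[t pp'] s3] c] /= L1 L2 L3.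
split; last by split.
have c1 : splay_cost v (extract s v).1.1 <= B.+2.
  rewrite /splay_cost; have := sdepth_le v (extract s v).1.1.
  have := size_good hB Gex.1; lia.
move: c1; rewrite /extract /= => c1; lia.
Qed.

Lemma uniq_nth_tree (V : finType) (s : state V) i :
  uniq (all_verts s) -> uniq (inorder (nth (SLeaf, None) s i).1).
Proof.
elim: s i => [|tp s IH] i; first by rewrite nth_nil.
rewrite /all_verts /= cat_uniq => /and3P [U1 _ U2].
by case: i => [|i] //=; apply: IH.
Qed.

Lemma tidx_nth (V : finType) (s : state V) i x :
  uniq (all_verts s) -> i < size s -> x \in inorder (nth (SLeaf, None) s i).1 ->
  tidx s x = i.
Proof.
elim: s i => [|tp s IH] i //.
rewrite /all_verts /= cat_uniq => /and3P [U1 U3 U2].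
rewrite /tidx /=; case: i => [|i] /= Hi xin; first by rewrite xin.
have xs : x \in flatten [seq inorder p.1 | p <- s].
  move: xin Hi; clear; elim: s i => [|tp' s IH] [|i] //=.
    by rewrite mem_cat => ->.
  by rewrite mem_cat => xin Hi; rewrite (IH i xin Hi) orbT.
have -> : (x \in inorder tp.1) = false.
  by apply/negP => xt; move/hasP: U3; apply; exists x.
by congr S; apply: IH.
Qed.

Lemma rpar_nth (V : finType) (s : state V) i j x0 :
  uniq (all_verts s) -> i < size s ->
  j < size (inorder (nth (SLeaf, None) s i).1) ->
  rpar s (nth x0 (inorder (nth (SLeaf, None) s i).1) j) =
  if j == 0 then (nth (SLeaf, None) s i).2
  else Some (nth x0 (inorder (nth (SLeaf, None) s i).1) j.-1).
Proof.
move=> U Hi Hj.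
have xin := mem_nth x0 Hj.
rewrite /rpar (tidx_nth U Hi xin) index_uniq //; last exact: uniq_nth_tree.
case: j Hj {xin} => [|j] Hj //=.
by rewrite (set_nth_default x0) //; lia.
Qed.

Lemma pairwise_formula (V : finType) (h : V -> nat) (l : seq V) x0 c :
  (forall j, j < size l -> h (nth x0 l j) = c + j) -> pairwise (ltrh h) l.
Proof.
elim: l c => [//|x l IH] c H /=; apply/andP; split.
  apply/allP => y yl; rewrite /ltrh.
  have := H 0 erefl; have := H (index y l).+1; rewrite /= nth_index // ltnS index_mem yl.
  by move=> /(_ erefl) -> ->; lia.
apply: (IH c.+1) => j Hj; have := H j.+1; rewrite /= => /(_ Hj) ->; lia.
Qed.

Lemma allG_of_nth (V : finType) h (s : state V) :
  (forall i, i < size s -> good h (nth (SLeaf, None) s i)) -> allG h s.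
Proof.
elim: s => [//|tp s IH] H /=; split; first exact: (H 0).
by apply: IH => i Hi; apply: (H i.+1).
Qed.

Lemma good_orig (V : finType) (h : V -> nat) (s : state V) :
  uniq (all_verts s) -> (forall x y, rpar s x = Some y -> h x = (h y).+1) ->
  allG h s.
Proof.
move=> U hrel; apply: allG_of_nth => i Hi.
case El: (inorder (nth (SLeaf, None) s i).1) => [|x0 l'].
  by split; rewrite El // => u w; rewrite in_nil.
set l := x0 :: l'.
have F : forall j, j < size l -> h (nth x0 l j) = h (nth x0 l 0) + j.
  elim=> [|j IHj] Hj; first by rewrite addn0.
  have := rpar_nth x0 U Hi; rewrite El => /(_ j.+1 Hj) /= /hrel ->.
  by rewrite IHj ?addnS //; lia.
split; first by rewrite El; exact: (pairwise_formula F).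
rewrite El; move=> u w ul pw.
have := rpar_nth x0 U Hi; rewrite El => /(_ 0 erefl) /=; rewrite pw => /hrel.
have := F (index u l); rewrite nth_index // index_mem ul => /(_ erefl) -> /= ->; lia.
Qed.

Lemma chain (V : finType) (s : state V) (h : V -> nat) :
  (forall x y, rpar s x = Some y -> h x = (h y).+1) ->
  (forall x, rpar s x = None -> h x = 1) ->
  (forall x, 0 < h x) ->
  forall k x, h x = k.+1 -> exists p, [/\ size p = k, path (adj s) x p,
     uniq (x :: p) & all (fun y => h y < h x) p].
Proof.
move=> hrel hnone hpos; elim=> [|k IH] x hx.
  by exists [::].
case E: (rpar s x) => [y|]; last by move: (hnone x E); rewrite hx.
have hy := hrel x y E; rewrite hx in hy; case: hy => hy.
have [q [Sq Pq Uq Aq]] := IH y (esym hy).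
exists (y :: q); split => //=.
- by rewrite Sq.
- by rewrite Pq andbT /adj E eqxx.
- rewrite -/(uniq (y :: q)) Uq andbT in_cons negb_or; apply/andP; split.
    by apply/eqP => xy; move: hy; rewrite -xy hx; lia.
  by apply/negP => xq; move/allP: Aq => /(_ x xq); rewrite hx -hy; lia.
- rewrite hx -hy ltnSn /=; apply/allP => z zq; move/allP: Aq => /(_ z zq); lia.
Qed.

Theorem theoremB1 :
  exists c : nat, forall (V : finType) (D : nat) (s : state V) (o : op V),
    lct_valid s -> diam_le s D -> op_pre s o ->
    op_cost s o <= c * D.+1 ^ 2.
Proof.
exists 50 => V D s o [U _ H3] Hd _.
pose F := fun o => obind (rpar s) o.
have H3' : forall x, exists n, iter n F (Some x) == None.
  by move=> x; case: (H3 x) => n En; exists n; rewrite /F En.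
pose h x := ex_minn (H3' x).
have hpos : forall x, 0 < h x.
  by move=> x; rewrite /h; case: ex_minnP => [[|m]] //.
have hrel : forall x y, rpar s x = Some y -> h x = (h y).+1.
  move=> x y E; rewrite /h; case: ex_minnP => m Pm mm; case: ex_minnP => k Pk mk.
  case: m Pm mm => [//|m] Pm mm.
  move: Pm; rewrite iterSr /F /= E => Pm.
  have := mk m Pm; have := mm k.+1; rewrite iterSr /F /= E => /(_ Pk); lia.
have hnone : forall x, rpar s x = None -> h x = 1.
  move=> x E; rewrite /h; case: ex_minnP => m Pm mm.
  case: m Pm mm => [//|m] Pm mm.
  have := mm 1; rewrite /= /F /= E => /(_ erefl); lia.
have hB : forall x, h x <= D.+1.
  move=> x; have hx := hpos x.
  have [p [Sp Pp Up _]] := chain hrel hnone hpos (k := (h x).-1) (x := x) ltac:(lia).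
  have := Hd x p Up Pp; lia.
have Gs : allG h s := good_orig U hrel.
have Acc : forall s' v, allG h s' ->
   (access s' v).2 <= D.+4 + D.+2 * (2 * D + 7) /\ allG h (access s' v).1.
  move=> s' v G'; have [A1 A2] := access_ok hB v G'; split => //; move: A1; lia.
rewrite /op_cost; case: o => [v|v|v w|v] /=.
- have := Acc s v Gs; case: (access s v) => s1 c1 /= [? _]; lia.
- have := Acc s v Gs; case: (access s v) => s1 c1 /= [A1 A2].
  case: s1 A2 => [|[t pp] rest] /= A2; first lia.
  case: (leftmost t) => [r|] /=; last lia.
  have := leftmost_steps_le t; have := sdepth_le r t.
  have := size_good hB A2.1.1; rewrite /splay_cost /=; lia.
- have := Acc s v Gs; case: (access s v) => s1 c1 /= [A1 A2].
  have := Acc s1 w A2; case: (access s1 w) => s2 c2 /= [B1 B2].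
  case: s2 B2 => [|[tw pw] rest] /= B2; first lia.
  case: (extract rest v).1.1 => [|? ? ?] /=; lia.
- have := Acc s v Gs; case: (access s v) => s1 c1 /= [A1 A2].
  case: s1 A2 => [|[t pp] rest] /= A2; first lia.
  case: t A2 => [|? ? ?] /= A2; lia.
Qed.
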